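(* Fix a reflection matrix $\mathbf\Phi$ and let $(\{\mathbf W_k^\star\}_{k\in\mathcal K},\mathbf R_0^\star)$ be an optimal solution of problem (SDR1.2). Define, for each $k\in\mathcal K$, $$\mathbf w_k^{\mathrm{opt,I}}=(\mathbf h_k^H\mathbf W_k^\star\mathbf h_k)^{-1/2}\,\mathbf W_k^\star\mathbf h_k,\qquad \mathbf R_0^{\mathrm{opt,I}}=\mathbf R_0^\star+\sum_{k\in\mathcal K}\mathbf W_k^\star-\sum_{k\in\mathcal K}\mathbf w_k^{\mathrm{opt,I}}(\mathbf w_k^{\mathrm{opt,I}})^H .$$ Then $\mathbf h_k^H\mathbf W_k^\star\mathbf h_k>0$ for all $k$ (so these are well defined), $\mathbf R_0^{\mathrm{opt,I}}\succeq\mathbf 0$, and $(\{\mathbf w_k^{\mathrm{opt,I}}\},\mathbf R_0^{\mathrm{opt,I}})$ is an optimal solution of problem (P1.1). In particular the relaxation is tight: (P1.1) and (SDR1.2) have the same optimal value.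
   Context: Let $M,N,K\ge1$ be integers and $\mathcal K=\{1,\dots,K\}$. Fixed data: $\mathbf G\in\mathbb C^{N\times M}$, $\mathbf h_{\mathrm d,k}\in\mathbb C^{M}$ and $\mathbf h_{\mathrm r,k}\in\mathbb C^{N}$ for $k\in\mathcal K$, thresholds $\Gamma_k>0$, noise powers $\sigma_k^2>0$, and a power budget $P_0>0$. A reflection matrix is $\mathbf\Phi=\mathrm{diag}(\mathbf v)$ with $\mathbf v\in\mathbb C^N$, $|v_n|=1$ for all $n$. For a given $\mathbf\Phi$ put $\mathbf h_k=\mathbf h_{\mathrm d,k}+\mathbf G^H\mathbf\Phi^H\mathbf h_{\mathrm r,k}$ and $\mathbf H_k=\mathbf h_k\mathbf h_k^H$. For $\mathbf w_1,\dots,\mathbf w_K\in\mathbb C^M$ and Hermitian $\mathbf R_0\succeq\mathbf 0$ in $\mathbb C^{M\times M}$, the Type-I SINR of user $k$ is $$\gamma_k^{\mathrm I}=\frac{|\mathbf h_k^H\mathbf w_k|^2}{\sum_{i\ne k}|\mathbf h_k^H\mathbf w_i|^2+\mathbf h_k^H\mathbf R_0\mathbf h_k+\sigma_k^2},$$ and the power constraint is $\sum_{k}\|\mathbf w_k\|^2+\mathrm{tr}(\mathbf R_0)\le P_0$. For Hermitian $\mathbf X\succeq\mathbf 0$ define $f(\mathbf X)=\mathrm{tr}\big((\mathbf G\mathbf X\mathbf G^H)^{-1}\big)$ if $\mathbf G\mathbf X\mathbf G^H$ is invertible and $f(\mathbf X)=+\infty$ otherwise. Problem (P1.1) (for fixed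 $\mathbf\Phi$): minimize $f\big(\sum_k\mathbf w_k\mathbf w_k^H+\mathbf R_0\big)$ over $\mathbf w_k\in\mathbb C^M$, $\mathbf R_0\succeq\mathbf 0$, subject to $\gamma_k^{\mathrm I}\ge\Gamma_k$ for all $k$ and the power constraint. Problem (SDR1.2) (for fixed $\mathbf\Phi$): minimize $f\big(\sum_k\mathbf W_k+\mathbf R_0\big)$ over Hermitian $\mathbf W_k\succeq\mathbf 0$ ($k\in\mathcal K$) and $\mathbf R_0\succeq\mathbf 0$, subject to $(1+\tfrac1{\Gamma_k})\mathrm{tr}(\mathbf H_k\mathbf W_k)-\mathrm{tr}\big(\mathbf H_k(\sum_{i}\mathbf W_i+\mathbf R_0)\big)\ge\sigma_k^2$ for all $k$, and $\sum_k\mathrm{tr}(\mathbf W_k)+\mathrm{tr}(\mathbf R_0)\le P_0$. *)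

(* Defs.v *)
From HB Require Import structures.
From mathcomp Require Import all_boot all_order all_algebra.
Set Implicit Arguments. Unset Strict Implicit. Unset Printing Implicit Defensive.
Import Order.TTheory GRing.Theory Num.Theory.
Local Open Scope ring_scope.

(* Complex scalars: an arbitrary numeric closed field C (e.g. the complex
   numbers); the order on C is the partial order "y - x is a nonnegative real". *)

Section Defs.
Variable C : numClosedFieldType.

Definition ctr (m n : nat) (A : 'M[C]_(m, n)) : 'M[C]_(n, m) :=
  (map_mx Num.conj A)^T.

Definition hermitian (n : nat) (A : 'M[C]_n) : Prop := ctr A = A.

Definition psd (n : nat) (A : 'M[C]_n) : Prop :=
  hermitian A /\ forall x : 'cV[C]_n, 0 <= (ctr x *m A *m x) 0 0.

Definition qf (m n : nat) (x : 'cV[C]_m) (A : 'M[C]_(m, n)) (y : 'cV[C]_n) : C :=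
  (ctr x *m A *m y) 0 0.

Definition norm2 (n : nat) (w : 'cV[C]_n) : C := \sum_i `|w i 0| ^+ 2.

(* extended values: None = +oo *)
Definition ext_le (a b : option C) : Prop :=
  match b with
  | None => True
  | Some y => match a with None => False | Some x => x <= y end
  end.

Definition fobj (N M : nat) (G : 'M[C]_(N, M)) (X : 'M[C]_M) : option C :=
  let Y := G *m X *m ctr G in
  if Y \in unitmx then Some (\tr (invmx Y)) else None.

(* effective channel h_k = h_{d,k} + G^H Phi^H h_{r,k}, Phi = diag(v) *)
Definition heff (N M : nat) (G : 'M[C]_(N, M)) (v : 'rV[C]_N)
  (hd : 'cV[C]_M) (hr : 'cV[C]_N) : 'cV[C]_M :=
  hd + ctr G *m ctr (diag_mx v) *m hr.

Definition unimodular (N : nat) (v : 'rV[C]_N) : Prop := forall n, `|v 0 n| = 1.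

Definition sinrI (M K : nat) (h : 'cV[C]_M) (w : 'I_K -> 'cV[C]_M)
  (R0 : 'M[C]_M) (sigma2 : C) (k : 'I_K) : C :=
  `|qf h 1%:M (w k)| ^+ 2 /
  (\sum_(i < K | i != k) `|qf h 1%:M (w i)| ^+ 2 + qf h R0 h + sigma2).

Definition feasible_P11 (N M K : nat) (G : 'M[C]_(N, M)) (v : 'rV[C]_N)
  (hd : 'I_K -> 'cV[C]_M) (hr : 'I_K -> 'cV[C]_N) (Gamma sigma2 : 'I_K -> C)
  (P0 : C) (w : 'I_K -> 'cV[C]_M) (R0 : 'M[C]_M) : Prop :=
  psd R0 /\
  (forall k, Gamma k <= sinrI (heff G v (hd k) (hr k)) w R0 (sigma2 k) k) /\
  \sum_k norm2 (w k) + \tr R0 <= P0.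

Definition obj_P11 (N M K : nat) (G : 'M[C]_(N, M))
  (w : 'I_K -> 'cV[C]_M) (R0 : 'M[C]_M) : option C :=
  fobj G (\sum_k w k *m ctr (w k) + R0).

Definition optimal_P11 (N M K : nat) (G : 'M[C]_(N, M)) (v : 'rV[C]_N)
  (hd : 'I_K -> 'cV[C]_M) (hr : 'I_K -> 'cV[C]_N) (Gamma sigma2 : 'I_K -> C)
  (P0 : C) (w : 'I_K -> 'cV[C]_M) (R0 : 'M[C]_M) : Prop :=
  feasible_P11 G v hd hr Gamma sigma2 P0 w R0 /\
  forall w' R0', feasible_P11 G v hd hr Gamma sigma2 P0 w' R0' ->
    ext_le (obj_P11 G w R0) (obj_P11 G w' R0').

Definition feasible_SDR (N M K : nat) (G : 'M[C]_(N, M)) (v : 'rV[C]_N)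
  (hd : 'I_K -> 'cV[C]_M) (hr : 'I_K -> 'cV[C]_N) (Gamma sigma2 : 'I_K -> C)
  (P0 : C) (W : 'I_K -> 'M[C]_M) (R0 : 'M[C]_M) : Prop :=
  (forall k, psd (W k)) /\ psd R0 /\
  (forall k,
     let h := heff G v (hd k) (hr k) in
     let Hk := h *m ctr h in
     sigma2 k <= (1 + (Gamma k)^-1) * \tr (Hk *m W k)
                 - \tr (Hk *m (\sum_i W i + R0))) /\
  \sum_k \tr (W k) + \tr R0 <= P0.

Definition obj_SDR (N M K : nat) (G : 'M[C]_(N, M))
  (W : 'I_K -> 'M[C]_M) (R0 : 'M[C]_M) : option C :=
  fobj G (\sum_k W k + R0).

Definition optimal_SDR (N M K : nat) (G : 'M[C]_(N, M)) (v : 'rV[C]_N)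
  (hd : 'I_K -> 'cV[C]_M) (hr : 'I_K -> 'cV[C]_N) (Gamma sigma2 : 'I_K -> C)
  (P0 : C) (W : 'I_K -> 'M[C]_M) (R0 : 'M[C]_M) : Prop :=
  feasible_SDR G v hd hr Gamma sigma2 P0 W R0 /\
  forall W' R0', feasible_SDR G v hd hr Gamma sigma2 P0 W' R0' ->
    ext_le (obj_SDR G W R0) (obj_SDR G W' R0').

Definition wopt (N M K : nat) (G : 'M[C]_(N, M)) (v : 'rV[C]_N)
  (hd : 'I_K -> 'cV[C]_M) (hr : 'I_K -> 'cV[C]_N) (W : 'I_K -> 'M[C]_M)
  (k : 'I_K) : 'cV[C]_M :=
  let h := heff G v (hd k) (hr k) in
  (sqrtC (qf h (W k) h))^-1 *: (W k *m h).

Definition R0opt (N M K : nat) (G : 'M[C]_(N, M)) (v : 'rV[C]_N)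
  (hd : 'I_K -> 'cV[C]_M) (hr : 'I_K -> 'cV[C]_N) (W : 'I_K -> 'M[C]_M)
  (R0 : 'M[C]_M) : 'M[C]_M :=
  R0 + \sum_k W k
     - \sum_k wopt G v hd hr W k *m ctr (wopt G v hd hr W k).

End Defs.

(* Main.v *)
Require Import Defs.
From mathcomp Require Import all_boot all_order all_algebra.
From mathcomp Require Import ring.
Import Order.TTheory GRing.Theory Num.Theory.
Local Open Scope ring_scope.

Section H. Variable C : numClosedFieldType.

Lemma ctrM m n p (A : 'M[C]_(m, n)) (B : 'M[C]_(n, p)) :
  ctr (A *m B) = ctr B *m ctr A.
Proof. by rewrite /ctr map_mxM trmx_mul. Qed.

Lemma ctrK m n (A : 'M[C]_(m, n)) : ctr (ctr A) = A.
Proof.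
by apply/matrixP=> i j; rewrite /ctr !mxE conjCK.
Qed.

Lemma ctrD m n (A B : 'M[C]_(m, n)) : ctr (A + B) = ctr A + ctr B.
Proof. by apply/matrixP=> i j; rewrite /ctr !mxE rmorphD. Qed.

Lemma ctrN m n (A : 'M[C]_(m, n)) : ctr (- A) = - ctr A.
Proof. by apply/matrixP=> i j; rewrite /ctr !mxE rmorphN. Qed.

Lemma ctrB m n (A B : 'M[C]_(m, n)) : ctr (A - B) = ctr A - ctr B.
Proof. by rewrite ctrD ctrN. Qed.

Lemma ctr_sum m n I (r : seq I) (P : pred I) (F : I -> 'M[C]_(m, n)) :
  ctr (\sum_(i <- r | P i) F i) = \sum_(i <- r | P i) ctr (F i).
Proof.
elim/big_rec2: _ => [|i x y _ <-]; last by rewrite ctrD.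
by apply/matrixP=> i j; rewrite /ctr !mxE rmorph0.
Qed.

Lemma ctrZ m n (c : C) (A : 'M[C]_(m, n)) : ctr (c *: A) = c^* *: ctr A.
Proof. by apply/matrixP=> i j; rewrite /ctr !mxE rmorphM. Qed.

Lemma ctr00 (A : 'M[C]_1) : ctr A 0 0 = (A 0 0)^*.
Proof. by rewrite /ctr !mxE. Qed.

Lemma mx11M n (A : 'M[C]_(1, n)) (B : 'M[C]_(n, 1)) (D : 'M[C]_1) :
  (A *m B *m D) 0 0 = (A *m B) 0 0 * D 0 0.
Proof. by rewrite mxE big_ord1. Qed.

Lemma mx11 (A B : 'M[C]_1) : (A *m B) 0 0 = A 0 0 * B 0 0.
Proof. by rewrite mxE big_ord1. Qed.

Lemma qfD m n (x : 'cV[C]_m) (A B : 'M[C]_(m, n)) y :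
  qf x (A + B) y = qf x A y + qf x B y.
Proof. by rewrite /qf mulmxDr mulmxDl mxE. Qed.

Lemma qfN m n (x : 'cV[C]_m) (A : 'M[C]_(m, n)) y :
  qf x (- A) y = - qf x A y.
Proof. by rewrite /qf mulmxN mulNmx mxE. Qed.

Lemma qfB m n (x : 'cV[C]_m) (A B : 'M[C]_(m, n)) y :
  qf x (A - B) y = qf x A y - qf x B y.
Proof. by rewrite qfD qfN. Qed.

Lemma qf_sum m n I (r : seq I) (P : pred I) (F : I -> 'M[C]_(m, n)) x y :
  qf x (\sum_(i <- r | P i) F i) y = \sum_(i <- r | P i) qf x (F i) y.
Proof.
elim/big_rec2: _ => [|i a b _ <-]; last by rewrite qfD.
by rewrite /qf mulmx0 mul0mx mxE.
Qed.

Lemma qf_conj m (x y : 'cV[C]_m) (A : 'M[C]_m) :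
  Defs.hermitian A -> (qf x A y)^* = qf y A x.
Proof.
move=> hA; rewrite /qf -ctr00 !ctrM ctrK hA mulmxA //.
Qed.

Lemma qfZr m n (x : 'cV[C]_m) (A : 'M[C]_(m, n)) c y :
  qf x A (c *: y) = c * qf x A y.
Proof. by rewrite /qf -scalemxAr mxE. Qed.

Lemma qfZl m n (x : 'cV[C]_m) (A : 'M[C]_(m, n)) c y :
  qf (c *: x) A y = c^* * qf x A y.
Proof. by rewrite /qf ctrZ -!scalemxAl mxE. Qed.

Lemma qfDl m n (x z : 'cV[C]_m) (A : 'M[C]_(m, n)) y :
  qf (x + z) A y = qf x A y + qf z A y.
Proof. by rewrite /qf ctrD !mulmxDl mxE. Qed.

Lemma qfDr m n (x : 'cV[C]_m) (A : 'M[C]_(m, n)) y z :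
  qf x A (y + z) = qf x A y + qf x A z.
Proof. by rewrite /qf !mulmxDr mxE. Qed.

Lemma qf1 m (x y : 'cV[C]_m) : qf x 1%:M y = (ctr x *m y) 0 0.
Proof. by rewrite /qf mulmx1. Qed.

Lemma qf_outer m (x u : 'cV[C]_m) : qf x (u *m ctr u) x = `|qf x 1%:M u| ^+ 2.
Proof.
rewrite normCK qf1 /qf mulmxA -(mulmxA (ctr x *m u)) mx11 -ctr00 ctrM ctrK //.
Qed.

Lemma qf_Mr m (x : 'cV[C]_m) (A : 'M[C]_m) y : qf x A y = qf x 1%:M (A *m y).
Proof. by rewrite qf1 /qf mulmxA. Qed.

Lemma tr_outer m (h : 'cV[C]_m) (A : 'M[C]_m) : \tr (h *m ctr h *m A) = qf h A h.
Proof.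
rewrite -mulmxA mxtrace_mulC /qf /mxtrace big_ord1 //.
Qed.

Lemma tr_outer1 m (w : 'cV[C]_m) : \tr (w *m ctr w) = norm2 w.
Proof.
rewrite mxtrace_mulC /norm2 /mxtrace big_ord1 mxE.
by apply: eq_bigr => i _; rewrite /ctr !mxE normCK mulrC.
Qed.

Lemma psd_ge0 m (A : 'M[C]_m) x : psd A -> 0 <= qf x A x.
Proof. by case=> _ /(_ x). Qed.

Lemma psd_outer m (u : 'cV[C]_m) : psd (u *m ctr u).
Proof.
split; first by rewrite /Defs.hermitian ctrM ctrK.
by move=> x; rewrite -/(qf _ _ _) qf_outer exprn_ge0.
Qed.

Lemma cs m (W : 'M[C]_m) x h : psd W -> 0 < qf h W h ->
  `|qf x W h| ^+ 2 <= qf x W x * qf h W h.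
Proof.
move=> [hW pW] a0.
set a := qf h W h. set b := qf h W x.
have ar : a^* = a by rewrite geC0_conj // ltW.
have xb : qf x W h = b^* by rewrite /b qf_conj.
have := pW (a *: x - b *: h); rewrite -/(qf _ _ _).
have -> : a *: x - b *: h = a *: x + (- b) *: h by rewrite scaleNr.
rewrite !qfDl !qfDr !qfZl !qfZr xb -/a -/b ar rmorphN.
have -> : a * (a * qf x W x) + a * (- b * b^*) + (- b^* * (a * b) + - b^* * (- b * a))
   = a * (qf x W x * a - b * b^*) by ring.
rewrite pmulr_rge0 // subr_ge0 => H.
by rewrite normCK conjCK mulrC.
Qed.

Lemma wopt_qf (N M K : nat) (G : 'M[C]_(N, M)) v hd hr (W : 'I_K -> 'M[C]_M) k x :
  0 <= qf (heff G v (hd k) (hr k)) (W k) (heff G v (hd k) (hr k)) ->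
  `|qf x 1%:M (wopt G v hd hr W k)| ^+ 2 = `|qf x (W k) (heff G v (hd k) (hr k))| ^+ 2 / qf (heff G v (hd k) (hr k)) (W k) (heff G v (hd k) (hr k)).
Proof.
set h := heff G v (hd k) (hr k) => a0; rewrite /wopt -/h qf1 -scalemxAr mxE -qf1 -qf_Mr.
rewrite normrM exprMn normfV [`|sqrtC _|]ger0_norm ?sqrtC_ge0 // exprVn sqrtCK mulrC //.
Qed.
End H.

Theorem proposition1 (C : numClosedFieldType) (M N K : nat)
  (HM : (0 < M)%N) (HN : (0 < N)%N) (HK : (0 < K)%N)
  (G : 'M[C]_(N, M)) (hd : 'I_K -> 'cV[C]_M) (hr : 'I_K -> 'cV[C]_N)
  (Gamma sigma2 : 'I_K -> C) (P0 : C)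
  (HGamma : forall k, 0 < Gamma k) (Hsigma : forall k, 0 < sigma2 k)
  (HP0 : 0 < P0)
  (v : 'rV[C]_N) (Hv : unimodular v)
  (Wst : 'I_K -> 'M[C]_M) (R0st : 'M[C]_M)
  (Hopt : optimal_SDR G v hd hr Gamma sigma2 P0 Wst R0st) :
  (forall k, 0 < qf (heff G v (hd k) (hr k)) (Wst k) (heff G v (hd k) (hr k))) /\
  psd (R0opt G v hd hr Wst R0st) /\
  optimal_P11 G v hd hr Gamma sigma2 P0 (wopt G v hd hr Wst) (R0opt G v hd hr Wst R0st) /\
  obj_P11 G (wopt G v hd hr Wst) (R0opt G v hd hr Wst R0st) = obj_SDR G Wst R0st.
Proof.
case: Hopt => [[HW [HR [Hc Hp]]] Hmin].
set hk := fun k => heff G v (hd k) (hr k).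
have Hc' : forall k, sigma2 k + \sum_(i | i != k) qf (hk k) (Wst i) (hk k)
    + qf (hk k) R0st (hk k) <= (Gamma k)^-1 * qf (hk k) (Wst k) (hk k).
  move=> k; have := Hc k; rewrite /= !tr_outer qfD qf_sum (bigD1 k) //= -/(hk k).
  move=> H; rewrite -subr_ge0; move: H; rewrite -subr_ge0.
  set a := qf _ (Wst k) _; set T := \sum_(i | _) _; set q := qf _ R0st _.
  by have -> : (1 + (Gamma k)^-1) * a - (a + T + q) - sigma2 k
     = (Gamma k)^-1 * a - (sigma2 k + T + q) by ring.
have T0 : forall (x : 'cV[C]_M) (P : pred 'I_K), 0 <= \sum_(i | P i) qf x (Wst i) x.
  by move=> x P; apply: sumr_ge0 => i _; apply: psd_ge0.
have apos : forall k, 0 < qf (hk k) (Wst k) (hk k).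
  move=> k; have H := Hc' k.
  have s0 : 0 < sigma2 k + \sum_(i | i != k) qf (hk k) (Wst i) (hk k)
    + qf (hk k) R0st (hk k).
    by apply: (lt_le_trans (Hsigma k)); rewrite -addrA lerDl addr_ge0 // ?T0 // psd_ge0.
  have := lt_le_trans s0 H.
  by rewrite pmulr_rgt0 // invr_gt0.
have herW : forall k, ctr (Wst k) = Wst k by move=> k; case: (HW k).
have wq : forall k x, `|qf x 1%:M (wopt G v hd hr Wst k)| ^+ 2
    = `|qf x (Wst k) (hk k)| ^+ 2 / qf (hk k) (Wst k) (hk k).
  by move=> k x; rewrite wopt_qf //; apply: ltW; apply: apos.
have qfR : forall x, qf x (R0opt G v hd hr Wst R0st) x =
    qf x R0st x + \sum_k (qf x (Wst k) x - `|qf x 1%:M (wopt G v hd hr Wst k)| ^+ 2).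
  move=> x; rewrite /R0opt qfB qfD !qf_sum sumrB addrA.
  by congr (_ - _); apply: eq_bigr => i _; rewrite qf_outer.
have psdR : psd (R0opt G v hd hr Wst R0st).
  split.
    rewrite /Defs.hermitian /R0opt ctrB ctrD !ctr_sum.
    case: HR => -> _; congr (_ + _ - _); apply: eq_bigr => i _ //.
    by rewrite ctrM ctrK.
  move=> x; rewrite -/(qf _ _ _) qfR addr_ge0 ?psd_ge0 //.
  apply: sumr_ge0 => i _; rewrite wq subr_ge0 ler_pdivrMr //.
  exact: cs.
have objE : obj_P11 G (wopt G v hd hr Wst) (R0opt G v hd hr Wst R0st) = obj_SDR G Wst R0st.
  by rewrite /obj_P11 /obj_SDR /R0opt addrC subrK addrC.
split => //; split => //; split => //.
split.
  split => //; split.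
    move=> k; have -> : heff G v (hd k) (hr k) = hk k by [].
    set h := hk k; set a := qf h (Wst k) h.
    have a0 : 0 < a by apply: apos.
    have nk : `|qf h 1%:M (wopt G v hd hr Wst k)| ^+ 2 = a.
      by rewrite wq -/h -/a ger0_norm ?ltW // expr2 mulfK // gt_eqF.
    have e1 : \sum_i qf h (Wst i) h = a + \sum_(i | i != k) qf h (Wst i) h.
      by rewrite (bigD1 k).
    have e2 : \sum_i `|qf h 1%:M (wopt G v hd hr Wst i)| ^+ 2 =
       `|qf h 1%:M (wopt G v hd hr Wst k)| ^+ 2
       + \sum_(i | i != k) `|qf h 1%:M (wopt G v hd hr Wst i)| ^+ 2.
      by rewrite (bigD1 k).
    rewrite /sinrI qfR sumrB e1 e2 nk.
    set T := \sum_(i | _) qf _ _ _; set U := \sum_(i | _) _; set q := qf h R0st h.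
    have -> : U + (q + (a + T - (a + U))) + sigma2 k = sigma2 k + T + q by ring.
    have D0 : 0 < sigma2 k + T + q.
      by apply: (lt_le_trans (Hsigma k)); rewrite -addrA lerDl addr_ge0 // ?T0 // psd_ge0.
    rewrite ler_pdivlMr //.
    have := Hc' k; rewrite -/h -/a -/T -/q -(ler_pM2l (HGamma k)) mulrA mulfV ?mul1r //.
    by rewrite gt_eqF.
  have -> : \sum_k norm2 (wopt G v hd hr Wst k) =
      \sum_k \tr (wopt G v hd hr Wst k *m ctr (wopt G v hd hr Wst k)).
    by apply: eq_bigr => i _; rewrite tr_outer1.
  rewrite /R0opt linearB linearD /= !linear_sum /=.
  set A := \sum_k \tr _; set B := \sum_k \tr _.
  by move: Hp; rewrite -/B; have -> : A + (\tr R0st + B - A) = B + \tr R0st by ring.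
move=> w' R0' [HR' [Hs' Hp']].
have F : feasible_SDR G v hd hr Gamma sigma2 P0 (fun k => w' k *m ctr (w' k)) R0'.
  split; first by move=> k; apply: psd_outer.
  split => //; split.
    move=> k /=; rewrite !tr_outer qfD qf_sum qf_outer.
    set h := heff G v (hd k) (hr k).
    have := Hs' k; rewrite /sinrI -/h.
    set b := `|qf h 1%:M (w' k)| ^+ 2.
    set U := \sum_(i | _) _; set q := qf h R0' h.
    have D0 : 0 < U + q + sigma2 k.
      apply: (lt_le_trans (Hsigma k)); rewrite addrC lerDl addr_ge0 ?psd_ge0 //.
      by apply: sumr_ge0 => i _; apply: exprn_ge0.
    rewrite ler_pdivlMr // => H.
    have e : \sum_i qf h (w' i *m ctr (w' i)) h = b + U.
      by rewrite (bigD1 k) //=; congr (_ + _); [rewrite qf_outer|apply: eq_bigr => i _; rewrite qf_outer].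
    rewrite e -subr_ge0.
    have -> : (1 + (Gamma k)^-1) * b - (b + U + q) - sigma2 k
        = (Gamma k)^-1 * (b - Gamma k * (U + q + sigma2 k)).
      by field; rewrite gt_eqF.
    by apply: mulr_ge0; [rewrite invr_ge0 ltW | rewrite subr_ge0].
  move: Hp'; congr (_ + _ <= _); apply: eq_bigr => i _; by rewrite tr_outer1.
rewrite objE; exact: (Hmin _ _ F).
Qed.
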